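(* Let $k$ be a natural number and let $p$ be the smallest prime with $p > 2^{k-1}+1$. For natural numbers $q,\ell$ let $G_{q,\ell}$ denote the graph consisting of two vertices $s,t$ joined by $q$ internally disjoint paths, each of length $\ell$. Then $G_{q,2^{k-1}}$ is not $\mathbb{Z}_2^k$-connected for any odd $q$, and $G_{q,2^{k-1}}$ is $\mathbb{Z}_p$-connected whenever $q \geq p$.
   Context: Graphs are finite, may have multiple edges but no loops. $\mathbb{Z}_2^k$ denotes the direct product of $k$ copies of $\mathbb{Z}_2$. For an orientation $D$ of $G$ and a vertex $v$, $E^+(v)$ (resp. $E^-(v)$) is the set of edges directed out of (resp. into) $v$. For an Abelian group $\Gamma$, a graph $G$ is $\Gamma$-connected if for some (equivalently, any) orientation $D$ of $G$ and every function $\beta: V(G)\to\Gamma$ with $\sum_{v\in V(G)}\beta(v)=0$ there exists $f: E(G)\to\Gamma$ with $f(e)\neq 0$ for all edges $e$ and $\sum_{e\in E^+(v)} f(e)-\sum_{e\in E^-(v)} f(e)=\beta(v)$ for all $v\in V(G)$. *)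

(* Defs.v *)
From HB Require Import structures.
From mathcomp Require Import all_boot all_order all_algebra.
Set Implicit Arguments. Unset Strict Implicit. Unset Printing Implicit Defensive.
Import GRing.Theory.
Local Open Scope ring_scope.

(* A finite multigraph (no loops required by the users) is given by a finite
   vertex type V, a finite edge type E and, for each edge, its two ends
   [end1 e] and [end2 e]. *)

Definition tail_of (V E : Type) (end1 end2 : E -> V) (o : E -> bool) (e : E) : V :=
  if o e then end1 e else end2 e.
Definition head_of (V E : Type) (end1 end2 : E -> V) (o : E -> bool) (e : E) : V :=
  if o e then end2 e else end1 e.

Definition group_connected (Gamma : zmodType) (V E : finType)
    (end1 end2 : E -> V) : Prop :=
  exists o : E -> bool,
    forall beta : V -> Gamma, \sum_(v : V) beta v = 0 ->
    exists f : E -> Gamma,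
      (forall e, f e != 0) /\
      forall v : V,
        \sum_(e : E | tail_of end1 end2 o e == v) f e
        - \sum_(e : E | head_of end1 end2 o e == v) f e = beta v.

(* The graph G_{q,l}: vertices s, t (inl false, inl true) and internal
   vertices inr (i, j) = the (j+1)-th vertex of the i-th path (j < l-1).
   Edges (i, j), i < q, j < l: the j-th edge of path i, joining the
   j-th and (j+1)-th vertices of that path (0-th = s, l-th = t). *)
Definition theta_V (q l : nat) : finType := (bool + ('I_q * 'I_l.-1))%type.
Definition theta_E (q l : nat) : finType := ('I_q * 'I_l)%type.

Definition theta_pos (q l : nat) (i : 'I_q) (m : nat) : theta_V q l :=
  if m == 0%N then inl false
  else if m == l then inl true
  else match @insub nat (fun n => (n < l.-1)%N) 'I_l.-1 m.-1 with
       | Some j => inr (i, j)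
       | None => inl false (* never reached for 0 < m < l *)
       end.

Definition theta_end1 (q l : nat) (e : theta_E q l) : theta_V q l :=
  theta_pos l e.1 (nat_of_ord e.2).
Definition theta_end2 (q l : nat) (e : theta_E q l) : theta_V q l :=
  theta_pos l e.1 (nat_of_ord e.2).+1.

Definition Z2k (k : nat) : zmodType := {ffun 'I_k -> 'Z_2}.

(* Main.v *)
Require Import Defs.
From mathcomp Require Import all_boot all_order all_algebra zify ring.
Set Implicit Arguments. Unset Strict Implicit. Unset Printing Implicit Defensive.
Import GRing.Theory.

Module Aux.
Local Open Scope ring_scope.

Section Theta.
Variables (q l : nat).
Hypothesis l0 : (0 < l)%N.

Lemma pos_s (i : 'I_q) m : (m <= l)%N -> (theta_pos l i m == inl false) = (m == 0%N).
Proof.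
rewrite /theta_pos; case: m => [|m] ml //=.
case: ifP => ml' //. case: (insubP 'I_l.-1 m) => [j _ _|] //.
by rewrite -ltnS prednK // ltn_neqAle ml' ml.
Qed.

Lemma pos_inr (i i' : 'I_q) m (mm : 'I_l.-1) : (m <= l)%N ->
  (theta_pos l i m == inr (i', mm)) = (i == i') && (m == mm.+1).
Proof.
rewrite /theta_pos; case: m => [|m] ml; first by rewrite andbF.
case: ifP => [/eqP ml'|ml'] /=.
  have h : (mm.+1 < l)%N by move: (ltn_ord mm); rewrite -ltnS prednK.
  by rewrite ml' (gtn_eqF h) andbF.
case: (insubP 'I_l.-1 m) => [j hj ej|] /=.
  rewrite -ej eqSS; apply/eqP/andP => [[-> ->]//|[/eqP-> /eqP/val_inj->]] //.
move/negP; case; by rewrite -ltnS prednK // ltn_neqAle ml' ml.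
Qed.

Lemma pos_t (i : 'I_q) m : (m <= l)%N -> (theta_pos l i m == inl true) = (m == l).
Proof.
rewrite /theta_pos; case: m => [|m] ml /=; first by case: (l) l0.
case: ifP => ml' //. case: (insubP 'I_l.-1 m) => [j _ _|] //.
Qed.

Variable (G : zmodType) (f : theta_E q l -> G).

Lemma S1_s : \sum_(e | @theta_end1 q l e == inl false) f e = \sum_(i < q) f (i, Ordinal l0).
Proof.
rewrite (eq_bigr (fun i => \sum_(j | j == Ordinal l0) f (i, j))); last first.
  by move=> i _; rewrite big_pred1_eq.
rewrite pair_big_dep /=; apply: eq_big => [[i j]|[i j] _] //=.
by rewrite /theta_end1 pos_s 1?ltnW //.
Qed.

Lemma S2_s : \sum_(e | @theta_end2 q l e == inl false) f e = 0.
Proof.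
by rewrite big_pred0 // => -[i j]; rewrite /theta_end2 pos_s.
Qed.

Lemma S1_inr (i : 'I_q) (mm : 'I_l.-1) (h : (mm.+1 < l)%N) :
  \sum_(e | @theta_end1 q l e == inr (i, mm)) f e = f (i, Ordinal h).
Proof.
apply: big_pred1 => -[i' j] /=; rewrite /theta_end1 /= pos_inr; last exact: ltnW (ltn_ord j).
by rewrite xpair_eqE.
Qed.

Lemma S2_inr (i : 'I_q) (mm : 'I_l.-1) (h : (mm < l)%N) :
  \sum_(e | @theta_end2 q l e == inr (i, mm)) f e = f (i, Ordinal h).
Proof.
apply: big_pred1 => -[i' j] /=; rewrite /theta_end2 /= pos_inr; last exact: ltn_ord j.
by rewrite xpair_eqE eqSS.
Qed.
End Theta.

Lemma sum_fiber (G : zmodType) (V E : finType) (g : E -> V) (f : E -> G) :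
  \sum_(v : V) \sum_(e | g e == v) f e = \sum_e f e.
Proof.
rewrite (exchange_big_dep xpredT) //=; apply: eq_bigr => e _.
by rewrite (big_pred1 (g e)) // => v; rewrite /= eq_sym.
Qed.
Lemma sum_boundary (G : zmodType) (V E : finType) (g1 g2 : E -> V) (f : E -> G) :
  \sum_(v : V) (\sum_(e | g1 e == v) f e - \sum_(e | g2 e == v) f e) = 0.
Proof. by rewrite sumrB !sum_fiber subrr. Qed.

Section Comb.
Variables (p : nat) (pp : prime p).
Let p1 : (1 < p)%N. Proof. exact: prime_gt1. Qed.

Lemma cardZp : #|'Z_p| = p.
Proof. by rewrite card_ord Zp_cast. Qed.

Lemma closure_full (T : {set 'Z_p}) (d t0 : 'Z_p) : d != 0 ->
  (forall t, t \in T -> t + d \in T) -> t0 \in T -> forall y, y \in T.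
Proof.
move=> d0 cl t0T y.
have hm : forall m, t0 + d *+ m \in T.
  elim=> [|m IH]; first by rewrite mulr0n addr0.
  by rewrite mulrSr addrA cl.
have du : d \is a GRing.unit.
  rewrite -[d]natr_Zp unitZpE // prime_coprime //.
  apply/negP => /dvdn_leq; rewrite lt0n.
  have : (val d != 0)%N by apply: contra d0 => /eqP h; apply/eqP/val_inj.
  move=> -> /(_ isT); rewrite leqNgt.
  by rewrite (leq_trans (ltn_ord d) (eq_leq (Zp_cast p1))).
have -> : y = t0 + d *+ val ((y - t0) / d).
  by rewrite -mulr_natl natr_Zp divrK // addrC subrK.
exact: hm.
Qed.

Variable A : nat -> {set 'Z_p}.

Definition Sset n : {set 'Z_p} :=
  [set y | [exists x : {ffun 'I_n -> 'Z_p}, [forall i, x i \in A i] && (\sum_i x i == y)]].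

Lemma S_step n y a : y \in Sset n -> a \in A n -> y + a \in Sset n.+1.
Proof.
rewrite !inE => /existsP[x /andP[/forallP xA /eqP xs]] aA.
apply/existsP; exists [ffun i : 'I_n.+1 => if unlift ord_max i is Some j then x j else a].
apply/andP; split.
  apply/forallP => i; rewrite ffunE; case: unliftP => [j ->|->] //.
  by rewrite lift_max.
rewrite big_ord_recr /= ffunE unlift_none -xs; apply/eqP; congr (_ + _).
apply: eq_bigr => i _; rewrite ffunE.
have -> : widen_ord (leqnSn n) i = lift ord_max i by apply/val_inj; rewrite /= /bump leqNgt ltn_ord.
by rewrite liftK.
Qed.

Lemma S0 : (0 : 'Z_p) \in Sset 0.
Proof.
rewrite inE; apply/existsP; exists [ffun => 0]; rewrite big_ord0 eqxx andbT.
by apply/forallP => -[].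
Qed.

Lemma S_grow n : (1 < #|A n|)%N -> (0 < #|Sset n|)%N -> (#|Sset n.+1| <= #|Sset n|)%N ->
  Sset n = setT.
Proof.
move=> /card_gt1P[a [b [aA bA ab]]] /card_gt0P[t0 t0T] le.
set T := Sset n.
have img c : c \in A n -> [set t + c | t in T] = Sset n.+1.
  move=> cA; apply/eqP; rewrite eqEcard; apply/andP; split.
    by apply/subsetP => z /imsetP[t tT ->]; apply: S_step.
  by rewrite card_imset //; apply: addIr.
apply/setP => y; rewrite in_setT; apply: (@closure_full T (b - a) t0 _ _ t0T y).
  by rewrite subr_eq0 eq_sym.
move=> t tT.
have : t + b \in [set t + a | t in T] by rewrite (img a aA) -(img b bA); apply: imset_f.
case/imsetP => t' t'T e.
by rewrite addrA e addrK.
Qed.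

Lemma S_card n : (forall i, (i < n)%N -> (1 < #|A i|)%N) -> (minn p n.+1 <= #|Sset n|)%N.
Proof.
elim: n => [_|n IH hA].
  have : (0 < #|Sset 0|)%N by apply/card_gt0P; exists 0; apply: S0.
  by move: p1; lia.
have IH' := IH (fun i hi => hA i (ltnW hi)).
have hAn := hA n (ltnSn n).
have le1 : (#|Sset n| <= #|Sset n.+1|)%N.
  case/card_gt0P: (ltnW hAn) => [a aA] .
  rewrite -(card_imset (Sset n) (addIr a)); apply: subset_leq_card.
  by apply/subsetP => z /imsetP[t tT ->]; apply: S_step.
have cT : (#|Sset n| <= p)%N by rewrite (leq_trans (max_card _)) // cardZp.
case: (leqP p #|Sset n|) => hp; first by lia.
have : (#|Sset n| < #|Sset n.+1|)%N.
  rewrite ltnNge; apply/negP => le2.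
  have := S_grow hAn _ le2.
  have hpos : (0 < #|Sset n|)%N by move: IH' p1; lia.
  move=> /(_ hpos) e; move: hp; rewrite e cardsT cardZp ltnn //.
by move: IH' hp; lia.
Qed.

Lemma S_full n : (forall i, (i < n)%N -> (1 < #|A i|)%N) -> (p <= n.+1)%N ->
  forall y, exists x : {ffun 'I_n -> 'Z_p}, (forall i : 'I_n, x i \in A i) /\ \sum_i x i = y.
Proof.
move=> hA hp y.
have hc := S_card hA.
have : Sset n == setT.
  rewrite eqEcard subsetT cardsT cardZp /=; by move: hc; rewrite (minn_idPl hp).
move/eqP/setP/(_ y); rewrite !inE => /existsP[x /andP[/forallP xA /eqP xs]].
by exists x.
Qed.
End Comb.

Lemma part2 (k p : nat) : prime p -> (2 ^ k.-1 + 1 < p)%N ->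
  forall q : nat, (p <= q)%N ->
     group_connected 'Z_p
         (@theta_end1 q (2 ^ k.-1)) (@theta_end2 q (2 ^ k.-1)).
Proof.
move=> pp hp q hq.
set l := (2 ^ k.-1)%N.
have l0 : (0 < l)%N by rewrite expn_gt0.
have hp' : (l + 1 < p)%N by [].
exists (fun _ => true) => beta hbeta.
pose b (i : 'I_q) (m : nat) : 'Z_p :=
  if (insub m : option 'I_l.-1) is Some mm then beta (inr (i, mm)) else 0.
pose c (i : 'I_q) (j : nat) := \sum_(m < j) b i m.
pose Aset (i : 'I_q) : {set 'Z_p} := [set y | [forall j : 'I_l, y + c i j != 0]].
pose A (m : nat) : {set 'Z_p} := if (insub m : option 'I_q) is Some i then Aset i else setT.
have AsetE (i : 'I_q) : A i = Aset i by rewrite /A valK.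
have cardA (i : 'I_q) : (1 < #|Aset i|)%N.
  have sub : ~: Aset i \subset [set - c i j | j : 'I_l].
    apply/subsetP => y; rewrite !inE negb_forall => /existsP[j].
    rewrite negbK addr_eq0 => /eqP ->; exact: imset_f.
  have h1 : (#|~: Aset i| <= l)%N.
    by rewrite (leq_trans (subset_leq_card sub)) // (leq_trans (leq_imset_card _ _)) // card_ord.
  have h2 := cardsC (Aset i).
  rewrite cardZp // in h2.
  by move: h1 h2 hp'; lia.
have hA : forall i, (i < q)%N -> (1 < #|A i|)%N.
  by move=> i hi; rewrite (_ : i = Ordinal hi) // AsetE cardA.
have [x [xA xs]] := S_full pp hA (leqW hq) (beta (inl false)).
exists (fun e : theta_E q l => x e.1 + c e.1 e.2); split.
  move=> [i j] /=; have := xA i; rewrite AsetE inE => /forallP; exact.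
rewrite /tail_of /head_of /=.
pose f := fun e : theta_E q l => x e.1 + c e.1 e.2.
have Hnt : forall v, v != inl true ->
   \sum_(e | theta_end1 e == v) f e - \sum_(e | theta_end2 e == v) f e = beta v.
  case=> [[]|[i mm]] // _.
    rewrite S1_s // S2_s // subr0 -xs; apply: eq_bigr => i _.
    by rewrite /f /c /= big_ord0 addr0.
  have h1 : (mm.+1 < l)%N by move: (ltn_ord mm); rewrite -ltnS prednK.
  have h0 : (mm < l)%N by apply: ltnW.
  rewrite (S1_inr l0 f i h1) (S2_inr l0 f i h0) /f /c /= big_ord_recr /=.
  rewrite /b valK; ring.
move=> v; have [->|vt] := eqVneq v (inl true); last exact: Hnt.
have := sum_boundary (@theta_end1 q l) (@theta_end2 q l) f.
rewrite (bigD1 (inl true)) //= (eq_bigr beta) => [|u /Hnt //].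
move=> H; rewrite (bigD1 (inl true)) //= in hbeta.
apply: (addIr (\sum_(u | u != inl true) beta u)); rewrite hbeta; exact: H.
Qed.

Lemma z2one (a : 'Z_2) : a != 0 -> a = 1.
Proof. by case: a => [[|[|[]]]] //= ? _; apply/val_inj. Qed.
Lemma z2odd q : odd q -> (q%:R : 'Z_2) = 1.
Proof. by move=> hq; apply/val_inj; rewrite /= val_Zp_nat // modn2 hq. Qed.
Lemma z2k_dbl k (x : Z2k k) : x + x = 0.
Proof.
apply/ffunP => i; rewrite !ffunE.
by case: (x i) => [[|[|[]]]] //= ?; apply/val_inj.
Qed.

Lemma char2_bd (G : zmodType) (V E : finType) (e1 e2 : E -> V) (o : E -> bool)
   (f : E -> G) (v : V) : (forall x : G, x + x = 0) ->
  \sum_(e | tail_of e1 e2 o e == v) f e - \sum_(e | head_of e1 e2 o e == v) f e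
  = \sum_(e | e1 e == v) f e + \sum_(e | e2 e == v) f e.
Proof.
move=> z.
have nx (y : G) : - y = y by apply/eqP; rewrite -subr_eq0 -opprD z oppr0.
rewrite nx !(big_mkcond (fun e => _ == v)) -!big_split /=; apply: eq_bigr => e _.
by rewrite /tail_of /head_of; case: (o e) => //; rewrite addrC.
Qed.

Lemma z2_lemma (G : zmodType) (a b c d : G) : (forall x : G, x + x = 0) ->
  a + b = c + d -> a + d = b + c.
Proof.
move=> z E.
have nx (y : G) : - y = y by apply/eqP; rewrite -subr_eq0 -opprD z oppr0.
have -> : a = c + d - b by rewrite -E addrK.
by rewrite nx [c + d + b]addrAC -[c + b + d + d]addrA (z d) addr0 addrC.
Qed.

Lemma part1 (k : nat) : (1 <= k)%N -> forall q, odd q ->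
  ~ group_connected (Z2k k) (@theta_end1 q (2 ^ k.-1)) (@theta_end2 q (2 ^ k.-1)).
Proof.
case: k => [//|k'] _ q hq [o H] /=.
set l := (2 ^ k')%N in H *.
have l0 : (0 < l)%N by rewrite expn_gt0.
pose Y := {ffun 'I_k' -> 'Z_2}.
pose cs : seq Y := enum Y.
pose y0 : Y := [ffun => 0].
pose g (y : Y) : {ffun 'I_k'.+1 -> 'Z_2} :=
  [ffun i : 'I_k'.+1 => (if unlift ord_max i is Some j then y j else 0 : 'Z_2)].
pose c (j : nat) : Z2k k'.+1 := g (nth y0 cs j).
pose beta0 (v : theta_V q l) : Z2k k'.+1 :=
  match v with inr (i, mm) => c mm + c mm.+1 | inl _ => 0 end.
pose beta (v : theta_V q l) := if v == inl true then - \sum_(u : theta_V q l) beta0 u else beta0 v.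
have hb : \sum_v beta v = 0.
  rewrite (bigD1 (inl true)) //= {1}/beta eqxx.
  rewrite [\sum_(i | i != inl true) _](eq_bigr beta0) => [|u hu]; last by rewrite /beta (negbTE hu).
  by rewrite [X in - X](bigD1 (inl true)) //= add0r addNr.
case: (H beta hb) => f [fnz feq].
have z := @z2k_dbl k'.+1.
have feq' v : \sum_(e | @theta_end1 q l e == v) f e + \sum_(e | @theta_end2 q l e == v) f e = beta v.
  by rewrite -(@char2_bd _ _ _ (@theta_end1 q l) (@theta_end2 q l) o f v z) feq.
pose j0 : 'I_l := Ordinal l0.
have step i (mm : 'I_l.-1) (h1 : (mm.+1 < l)%N) (h0 : (mm < l)%N) :
    f (i, Ordinal h1) + f (i, Ordinal h0) = c mm + c mm.+1.
  by have := feq' (inr (i, mm)); rewrite (S1_inr l0 f i h1) (S2_inr l0 f i h0).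
have claim : forall n i (jj : 'I_l), val jj = n -> f (i, jj) + c n = f (i, j0) + c 0.
  elim=> [|n IH] i jj hj.
    by rewrite (_ : jj = j0) //; apply/val_inj.
  have h1 : (n.+1 < l)%N by rewrite -hj ltn_ord.
  have h0 : (n < l)%N by apply: ltnW.
  have hm : (n < l.-1)%N by rewrite -ltnS prednK.
  have := step i (Ordinal hm) h1 h0; move/(z2_lemma z) => E.
  rewrite (_ : jj = Ordinal h1); last by apply/val_inj.
  by rewrite E; apply: IH.
have hs : size cs = l by rewrite -cardE card_ffun !card_ord.
have surj (X : Z2k k'.+1) : X ord_max = 0 -> exists jj : 'I_l, c jj = X.
  move=> hX; pose y : Y := [ffun j => X (lift ord_max j)].
  have yin : (index y cs < l)%N by rewrite -hs index_mem mem_enum.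
  exists (Ordinal yin); rewrite /c /= nth_index ?mem_enum //.
  apply/ffunP => i; rewrite !ffunE; case: unliftP => [j ->|->]; rewrite ?ffunE //.
have c0max j : c j ord_max = 0 by rewrite /c /g ffunE unlift_none.
have key i : f (i, j0) ord_max = 1.
  apply: z2one; apply/negP => /eqP h0.
  pose X := f (i, j0) + c 0.
  have hX : X ord_max = 0 by rewrite ffunE h0 c0max addr0.
  case: (surj X hX) => jj hc.
  have := claim jj i jj erefl; rewrite -/X -hc -{2}(add0r (c jj)) => /addIr e.
  by move: (fnz (i, jj)); rewrite e eqxx.
have := feq' (inl false); rewrite S1_s // S2_s // addr0 /beta /=.
move/(congr1 (fun F : Z2k k'.+1 => F ord_max)).
rewrite sum_ffunE (eq_bigr (fun _ => 1)) // sumr_const card_ord z2odd // ffunE.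
by move/eqP; rewrite oner_eq0.
Qed.
End Aux.

Theorem theorem3p2 (k p : nat) :
  (1 <= k)%N ->
  prime p -> (2 ^ k.-1 + 1 < p)%N ->
  (forall r : nat, prime r -> (2 ^ k.-1 + 1 < r)%N -> (p <= r)%N) ->
  (forall q : nat, odd q ->
     ~ group_connected (Z2k k)
         (@theta_end1 q (2 ^ k.-1)) (@theta_end2 q (2 ^ k.-1))) /\
  (forall q : nat, (p <= q)%N ->
     group_connected 'Z_p
         (@theta_end1 q (2 ^ k.-1)) (@theta_end2 q (2 ^ k.-1))).
Proof.
move=> hk pp hp _; split.
  exact: Aux.part1.
exact: Aux.part2.
Qed.
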